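(* Let $\mathcal{L}$ be an algebraic system and let $\mathbf{STop}\mathcal{L}$ be the category of semitopological $\mathcal{L}$-structures and continuous $\mathcal{L}$-homomorphisms. Let $\mathcal{C}$ be an epireflective subcategory of $\mathbf{Top}$. For each $(\mathfrak U,X)\in\mathbf{STop}\mathcal{L}$, endow $\mathrm{r}_{\mathcal C}X$ with the $\mathcal{L}$-structure $\mathfrak V$ given by $c_{\mathfrak V}=\mathrm{r}_{(X,\mathcal C)}(c_{\mathfrak U})$ for constants and $\Phi_{\mathfrak V}(\mathrm{r}_{(X,\mathcal C)}(x_1),\dots,\mathrm{r}_{(X,\mathcal C)}(x_n))=\mathrm{r}_{(X,\mathcal C)}(\Phi_{\mathfrak U}(x_1,\dots,x_n))$ for $n$-ary function symbols $\Phi$ (this is well defined, separately continuous, and makes $\mathrm{r}_{(X,\mathcal C)}$ an $\mathcal L$-homomorphism). Then the class $\mathrm{r}_{\mathcal C}(\mathbf{STop}\mathcal{L})$ of these structures $(\mathfrak V,\mathrm{r}_{\mathcal C}X)$ is an epireflective subcategory of $\mathbf{STop}\mathcal{L}$, with reflection arrows $\mathrm{r}_{(X,\mathcal C)}$; in particular for every continuous $\mathcal L$-homomorphism $f\colon X\to Y$ in $\mathbf{STop}\mathcal{L}$, the induced map $\mathrm{r}_{\mathcal C}(f)\colon \mathrm{r}_{\mathcal C}X\to\mathrm{r}_{\mathcal C}Y$ is an $\mathcal L$-homomorphism.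
   Context: An epireflective subcategory $\mathcal C$ of $\mathbf{Top}$ is a full, isomorphism-closed subcategory closed under products and subspaces; for each space $X$ there is $\mathrm{r}_{\mathcal C}X\in\mathcal C$ and a continuous surjection $\mathrm{r}_{(X,\mathcal C)}\colon X\to\mathrm{r}_{\mathcal C}X$ such that every continuous map from $X$ into a space of $\mathcal C$ factors uniquely through it; $\mathrm{r}_{\mathcal C}(f)$ denotes the unique continuous map with $\mathrm{r}_{\mathcal C}(f)\circ\mathrm{r}_{(X,\mathcal C)}=\mathrm{r}_{(Y,\mathcal C)}\circ f$. An algebraic system $\mathcal L$ consists of constant symbols, function symbols each of finite arity $n\ge1$, and a set of equations. An $\mathcal L$-structure $\mathfrak U$ is a set $X$ with interpretations $c_{\mathfrak U}\in X$ and $\Phi_{\mathfrak U}\colon X^n\to X$ satisfying the equations. A semitopological $\mathcal L$-structure is an $\mathcal L$-structure with a topology making every $\Phi_{\mathfrak U}$ separately continuous (continuous in each variable when the others are fixed). An $\mathcal L$-homomorphism preserves constants and operations. *)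

(* Defs.v *)
From HB Require Import structures.
From mathcomp Require Import all_boot all_order all_algebra.
From mathcomp Require Import all_classical all_reals topology.
Set Implicit Arguments. Unset Strict Implicit. Unset Printing Implicit Defensive.
Local Open Scope classical_set_scope.

Record signature := Signature {
  csym : Type;
  fsym : Type;
  arity : fsym -> nat;
  arity_pos : forall f, (0 < arity f)%N }.

Inductive term (S : signature) : Type :=
  | Var : nat -> term S
  | Cst : csym S -> term S
  | App : forall f : fsym S, ('I_(arity f) -> term S) -> term S.

Record algsys := AlgSys {
  sig_of :> signature;
  eqns : term sig_of -> term sig_of -> Prop }.

Record interp (L : signature) (X : Type) := Interp {
  icst : csym L -> X;
  ifun : forall f : fsym L, ('I_(arity f) -> X) -> X }.
Arguments icst {L X} i c : rename.
Arguments ifun {L X} i f a : rename.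
Arguments App {S} f a.

Fixpoint eval (L : signature) (X : Type) (U : interp L X) (v : nat -> X)
    (t : term L) : X :=
  match t with
  | Var n => v n
  | Cst c => icst U c
  | App f a => ifun U f (fun i => eval U v (a i))
  end.

Definition is_lstruct (L : algsys) (X : Type) (U : interp L X) : Prop :=
  forall t1 t2 : term L, eqns t1 t2 -> forall v : nat -> X, eval U v t1 = eval U v t2.

Definition upd (n : nat) (X : Type) (a : 'I_n -> X) (i : 'I_n) (x : X) : 'I_n -> X :=
  fun j => if j == i then x else a j.

Definition is_semitop (L : algsys) (X : topologicalType) (U : interp L X) : Prop :=
  is_lstruct U /\
  forall (f : fsym L) (a : 'I_(arity f) -> X) (i : 'I_(arity f)),
    continuous (fun x : X => ifun U f (upd a i x)).

Definition is_hom (L : signature) (X Y : Type) (U : interp L X) (W : interp L Y)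
    (h : X -> Y) : Prop :=
  (forall c, h (icst U c) = icst W c) /\
  (forall f (a : 'I_(arity f) -> X), h (ifun U f a) = ifun W f (h \o a)).

Definition is_onto (A B : Type) (f : A -> B) : Prop := forall y : B, exists x : A, f x = y.

(** C is a class of spaces, rC X is the reflection of X and r X the reflection
    arrow. *)
Record epireflective (C : topologicalType -> Prop)
    (rC : topologicalType -> topologicalType) (r : forall X : topologicalType, X -> rC X) : Prop := {
  epi_iso_closed : forall (X Y : topologicalType) (f : X -> Y) (g : Y -> X),
      continuous f -> continuous g -> cancel f g -> cancel g f -> C X -> C Y;
  epi_prod_closed : forall (I : Type) (T : I -> topologicalType),
      (forall i, C (T i)) -> C (prod_topology T);
  epi_sub_closed : forall (X : topologicalType) (A : set X),
      C X -> C (set_type A);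
  epi_refl_in : forall X, C (rC X);
  epi_refl_cont : forall X, continuous (r X);
  epi_refl_surj : forall X, is_onto (r X);
  epi_refl_univ : forall (X Z : topologicalType) (g : X -> Z),
      C Z -> continuous g ->
      exists! h : rC X -> Z, continuous h /\ h \o r X = g }.

Definition induced (L : signature) (X Z : Type) (U : interp L X) (rx : X -> Z)
    (V : interp L Z) : Prop :=
  (forall c, icst V c = rx (icst U c)) /\
  (forall f (a : 'I_(arity f) -> X), ifun V f (rx \o a) = rx (ifun U f a)).

(* Main.v *)
Require Import Defs.
From HB Require Import structures.
From mathcomp Require Import all_boot all_order all_algebra.
From mathcomp Require Import all_classical all_reals topology.

Lemma factor_eq (C : topologicalType -> Prop)
    (rC : topologicalType -> topologicalType) (r : forall X : topologicalType, X -> rC X)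
    (HC : @epireflective C rC r) (X : topologicalType) (g : X -> rC X) :
  continuous g -> forall x y, r X x = r X y -> g x = g y.
Proof.
move=> gc x y exy.
have [h [[hc hr] _]] := epi_refl_univ HC (epi_refl_in HC X) gc.
have := congr1 (fun k => k x) hr; have := congr1 (fun k => k y) hr => /= <- <-.
by rewrite exy.
Qed.

Arguments factor_eq {C rC r} HC {X} g.

Lemma wd_fun (L : algsys) (C : topologicalType -> Prop)
    (rC : topologicalType -> topologicalType) (r : forall X : topologicalType, X -> rC X)
    (HC : @epireflective C rC r) (X : topologicalType) (U : interp L X) :
  is_semitop U -> forall (f : Defs.fsym L) (a b : 'I_(arity f) -> X),
  (forall i, r X (a i) = r X (b i)) -> r X (ifun U f a) = r X (ifun U f b).
Proof.
move=> [_ Hc] f a b Hab.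
pose c (k : nat) := fun j : 'I_(arity f) => if (j < k)%N then b j else a j.
have c0 : c 0%N = a by apply: funext => j.
have cn : c (arity f) = b by apply: funext => j; rewrite /c ltn_ord.
suff H : forall k, (k <= arity f)%N -> r X (ifun U f a) = r X (ifun U f (c k)).
  by rewrite -cn; apply: H.
elim=> [|k IH] Hk; first by rewrite c0.
rewrite IH ?(ltnW Hk) //.
pose i := Ordinal Hk.
have E1 : c k = upd (c k) i (a i).
  apply: funext => j; rewrite /upd /c; case: eqP => [->|] //=.
  by rewrite ltnn.
have E2 : c k.+1 = upd (c k) i (b i).
  apply: funext => j; rewrite /upd /c.
  have -> : (j == i) = (nat_of_ord j == k).
    by apply/eqP/eqP => [->|?] //; apply: val_inj.
  case: (ltngtP j k) => H.
  - by rewrite ltnS (ltnW H).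
  - by rewrite ltnS leqNgt H.
  - by rewrite H ltnSn; congr b; apply: val_inj.
rewrite E1 E2.
apply: (factor_eq HC (fun x => r X (ifun U f (upd (c k) i x)))) (Hab i).
move=> x; apply: (continuous_comp (Hc f (c k) i x)).
exact: epi_refl_cont HC _ _.
Qed.

Arguments wd_fun {L C rC r} HC {X U}.

Lemma eval_ind_hom (L : signature) (X Z : Type) (U : interp L X) (rx : X -> Z)
    (V : interp L Z) : induced U rx V ->
  forall (w : nat -> X) t, Defs.eval V (rx \o w) t = rx (Defs.eval U w t).
Proof.
move=> [Hc Hf] w; elim=> [n|c|f a IH] //=.
rewrite -Hf; congr (ifun V f); apply: funext => i; exact: IH.
Qed.

Arguments eval_ind_hom {L X Z U rx V}.

Theorem theorem3p10 (L : algsys) (C : topologicalType -> Prop)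
    (rC : topologicalType -> topologicalType) (r : forall X : topologicalType, X -> rC X)
    (HC : @epireflective C rC r) :
  (* the induced structure exists (well defined) and is semitopological *)
  (forall (X : topologicalType) (U : interp L X), is_semitop U ->
     exists V : interp L (rC X), induced U (r X) V) /\
  (forall (X : topologicalType) (U : interp L X) (V : interp L (rC X)),
     is_semitop U -> induced U (r X) V ->
     [/\ is_semitop V,
         (* r_(X,C) is a continuous surjective L-homomorphism (epi reflection arrow) *)
         is_hom U V (r X), continuous (r X) /\ is_onto (r X),
         (* the object (V, rC X) lies in the class (its space lies in C) *)
         C (rC X) &
         (* universal property in STopL w.r.t. objects whose space is in C *)
         forall (Y : topologicalType) (W : interp L Y) (g : X -> Y),
           C Y -> is_semitop W -> continuous g -> is_hom U W g ->
           exists! h : rC X -> Y, [/\ continuous h, is_hom V W h & h \o r X = g]]) /\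
  (* r_C(f) is an L-homomorphism *)
  (forall (X Y : topologicalType) (U : interp L X) (W : interp L Y)
          (VX : interp L (rC X)) (VY : interp L (rC Y)) (f : X -> Y)
          (rf : rC X -> rC Y),
     is_semitop U -> is_semitop W -> induced U (r X) VX -> induced W (r Y) VY ->
     continuous f -> is_hom U W f ->
     continuous rf -> rf \o r X = r Y \o f ->
     is_hom VX VY rf).
Proof.
have lift : forall X : topologicalType, {s : rC X -> X | forall y, r X (s y) = y}.
  move=> X; apply: cid.
  have H : forall y, exists x, r X x = y by move=> y; exact: epi_refl_surj HC X y.
  exists (fun y => proj1_sig (cid (H y))) => y; exact: proj2_sig (cid (H y)).
have liftE : forall X (b : 'I_ _ -> rC X) n, False -> True by [].
split.
  move=> X U HU; have [s Hs] := lift X.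
  exists (Interp (fun c => r X (icst U c)) (fun f b => r X (ifun U f (s \o b)))).
  split => //= f a; apply: (wd_fun HC HU) => i /=; by rewrite Hs.
split.
  move=> X U V HU HV; have [s Hs] := lift X.
  have rs : forall n (b : 'I_n -> rC X), b = r X \o (s \o b).
    by move=> n b; apply: funext => i /=; rewrite Hs.
  have Hhom : is_hom U V (r X).
    by case: HV => Hc Hf; split => [c|f a]; rewrite ?Hc ?Hf.
  split => //.
  - split.
      move=> t1 t2 Ht v.
      have -> : v = r X \o (s \o v) by apply: funext => n /=; rewrite Hs.
      rewrite !(eval_ind_hom HV); congr (r X _); exact: HU.1 t1 t2 Ht _.
    move=> f b i.
    case: HU => _ Hc.
    have gc : continuous (fun x => r X (ifun U f (upd (s \o b) i x))).
      move=> x; apply: (continuous_comp (Hc f (s \o b) i x)); exact: epi_refl_cont HC _ _.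
    have [h [[hc hr] _]] := epi_refl_univ HC (epi_refl_in HC X) gc.
    suff -> : (fun y => ifun V f (upd b i y)) = h by [].
    apply: funext => y; rewrite -(Hs y).
    have := congr1 (fun k => k (s y)) hr => /= ->.
    rewrite -HV.2; congr (ifun V f); apply: funext => j; rewrite /upd /=.
    by case: eqP => //; rewrite Hs.
  - split; [exact: epi_refl_cont HC X | exact: epi_refl_surj HC X].
  - exact: epi_refl_in HC X.
  move=> Y W g CY HW gc [gcst gfun].
  have [h [[hc hr] huniq]] := epi_refl_univ HC CY gc.
  exists h; split.
    split => //; split.
      move=> c; rewrite HV.1; have := congr1 (fun k => k (icst U c)) hr => /= ->.
      exact: gcst.
    move=> f b; rewrite [b]rs HV.2.
    have := congr1 (fun k => k (ifun U f (s \o b))) hr => /= ->.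
    rewrite gfun -hr; by [].
  move=> h' [h'c _ h'r]; exact: huniq.
move=> X Y U W VX VY f rf HU HW HVX HVY fc [fcst ffun] rfc rfr.
have [s Hs] := lift X.
have rfE : forall x, rf (r X x) = r Y (f x) by move=> x; have := congr1 (fun k => k x) rfr; exact.
split.
  by move=> c; rewrite HVX.1 rfE fcst HVY.1.
move=> g b.
have -> : b = r X \o (s \o b) by apply: funext => i /=; rewrite Hs.
rewrite HVX.2 rfE ffun.
transitivity (ifun VY g (r Y \o (f \o (s \o b)))); first by rewrite HVY.2.
apply: f_equal; apply: funext => i /=; by rewrite rfE.
Qed.
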